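(* Let $G=(V,E)$ be an unweighted graph with $n$ vertices and let $k\geq 2$ be an integer. Run the clustering defined in the context with $r=k-1$ and $p=1-n^{-1/k}$. Let $T=\{(p_{c_x}(x),x): x\in V,\ x\neq c_x\}$ be the support forest and let $F=\bigcup_{x\in V}C(x)$, where $C(x)=\{(x,p_u(x)) : u\neq x,\ d^{(u)}(s,x)=d_{G'}(s,x)\}\cup\{(x,p_u(x)) : u\neq x,\ d^{(u)}(s,x)=d_{G'}(s,x)+1,\ \mathrm{ID}(u)<\mathrm{ID}(c_x)\}$. Then, for every outcome of the sampled values, $H=(V,T\cup F)$ is a spanner of $G$ of stretch $2k-1$, i.e., $d_H(u,v)\leq (2k-1)\,d_G(u,v)$ for all $u,v\in V$.
   Context: Setting (the clustering): $G=(V,E)$ is an unweighted graph with shortest-path distance $d_G$, and each vertex has a distinct identifier $\mathrm{ID}(v)$. Let $p\in(0,1)$ and $r\in\mathbb{N}$. Let $\mathrm{GeomCap}(p,r)$ be the distribution on $\{0,\dots,r\}$ with $\Pr[=i]=p(1-p)^i$ for $0\leq i\leq r-1$ and $\Pr[=r]=(1-p)^r$. Each vertex $v$ independently samples $\delta_v\sim\mathrm{GeomCap}(p,r)$. For $u,x\in V$ define $d^{(u)}(s,x):=r-\delta_u+d_G(u,x)$ and the level $d_{G'}(s,x):=\min_{u\in V} d^{(u)}(s,x)$. The cluster center $c_x$ of $x$ is the vertex $u$ with smallest $\mathrm{ID}$ among those with $d^{(u)}(s,x)=d_{G'}(s,x)$. For $u\neq x$ with $d_G(u,x)<\infty$,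 $p_u(x)$ denotes the predecessor of $x$ on an arbitrary but fixed shortest path from $u$ to $x$ in $G$. *)

(* Defs.v *)
From mathcomp Require Import all_boot.
Set Implicit Arguments. Unset Strict Implicit. Unset Printing Implicit Defensive.

Section Graph.
Variable V : finType.

Fixpoint nbhd (e : rel V) (n : nat) (u : V) : {set V} :=
  match n with
  | 0 => [set u]
  | n'.+1 => nbhd e n' u :|: [set y | [exists x in nbhd e n' u, e x y]]
  end.

(* Shortest-path distance d(u,v): Some d if v is reachable from u (then
   d < #|V|), None (= infinity) otherwise. *)
Definition dist (e : rel V) (u v : V) : option nat :=
  let i := find (fun i => v \in nbhd e i u) (iota 0 #|V|) in
  if i < #|V| then Some i else None.

(* a <= c * b in N u {infinity}, with None = infinity. *)
Definition oleq_mul (a : option nat) (c : nat) (b : option nat) : Prop :=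
  match b with
  | None => True
  | Some db => exists2 da, a = Some da & da <= c * db
  end.

(* pr u x = p_u(x): predecessor of x on a (fixed) shortest u-x path. *)
Definition is_pred_fun (e : rel V) (pr : V -> V -> V) : Prop :=
  forall u x d, u != x -> dist e u x = Some d ->
    e (pr u x) x /\ dist e u (pr u x) = Some d.-1.

Variables (e : rel V) (ID : V -> nat) (r : nat) (delta : V -> nat)
          (pr : V -> V -> V).

(* d^{(u)}(s,x) = r - delta_u + d_G(u,x)  (None = infinity) *)
Definition du (u x : V) : option nat :=
  omap (fun d => r - delta u + d) (dist e u x).

(* d_{G'}(s,x) = min_u d^{(u)}(s,x); finite since d^{(x)}(s,x) = r - delta_x. *)
Definition lvl (x : V) : nat :=
  \big[minn/(r - delta x)]_(u : V)
     (match du u x with Some d => d | None => r - delta x end).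

Definition is_center (x c : V) : bool :=
  (du c x == Some (lvl x)) &&
  [forall u, (du u x == Some (lvl x)) ==> (ID c <= ID u)].

Definition inT (a b : V) : bool :=
  [exists c, is_center b c && (c != b) && (a == pr c b)].

Definition inC (x y : V) : bool :=
  [exists u, (u != x) && (y == pr u x) &&
     ((du u x == Some (lvl x)) ||
      ((du u x == Some (lvl x).+1) &&
        [exists c, is_center x c && (ID u < ID c)]))].

Definition inTF (a b : V) : bool := inT a b || inC a b.

Definition spannerH : rel V := fun a b => inTF a b || inTF b a.

End Graph.

(* Main.v *)
Require Import Defs.
From mathcomp Require Import all_boot zify.
Set Implicit Arguments. Unset Strict Implicit. Unset Printing Implicit Defensive.

Section Nbhd.
Variables (V : finType) (f : rel V).

Lemma nbhd_self n u : u \in nbhd f n u.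
Proof. elim: n => [|n IH] /=; first by rewrite in_set1. by rewrite in_setU IH. Qed.

Lemma nbhd_of_path n u p : path f u p -> size p <= n -> last u p \in nbhd f n u.
Proof.
elim/last_ind: p n => [|q z IH] n /=; first by move=> _ _; exact: nbhd_self.
rewrite rcons_path size_rcons last_rcons => /andP[pq fz].
case: n => // n; rewrite ltnS => sq /=.
rewrite in_setU; apply/orP; right; rewrite inE; apply/existsP; exists (last u q).
by rewrite (IH n pq sq) fz.
Qed.

Lemma path_of_nbhd n u v : v \in nbhd f n u ->
  exists p, [/\ path f u p, last u p = v & size p <= n].
Proof.
elim: n v => [|n IH] v /=.
  by rewrite in_set1 => /eqP ->; exists [::].
rewrite in_setU => /orP[/IH [p [pp lp sp]]|].
  by exists p; split=> //; lia.
rewrite inE => /existsP [x /andP [/IH [p [pp lp sp]] fxv]].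
exists (rcons p v); split.
- by rewrite rcons_path pp lp fxv.
- by rewrite last_rcons.
- by rewrite size_rcons.
Qed.

Lemma dist_some u v d : dist f u v = Some d ->
  v \in nbhd f d u /\ (forall i, i < d -> v \notin nbhd f i u).
Proof.
rewrite /dist; case: ifP => // hi [<-].
have hh : has (fun i => v \in nbhd f i u) (iota 0 #|V|) by rewrite has_find size_iota.
split.
  by have := nth_find 0 hh; rewrite nth_iota // add0n.
move=> i hi'; have := before_find 0 hi'.
by rewrite nth_iota ?add0n => [->|]; last exact: ltn_trans hi' hi.
Qed.

Lemma dist_of_nbhd u v n : v \in nbhd f n u -> exists2 d, dist f u v = Some d & d <= n.
Proof.
move=> vn; have [p [pp lp sp]] := path_of_nbhd vn.
case: (shortenP pp) lp => p' pp' up' _ lp'.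
have sz : size p' < #|V|.
  by move/card_uniqP: up' => /= <-; exact: max_card.
have vin : v \in nbhd f (size p') u by rewrite -lp'; exact: nbhd_of_path.
set a := (fun i => v \in nbhd f i u).
have fl : forall m, a m -> find a (iota 0 #|V|) <= m.
  move=> m am; rewrite leqNgt; apply/negP => hlt.
  have hm : m < #|V|.
    by have := find_size a (iota 0 #|V|); rewrite size_iota; lia.
  by have := before_find 0 hlt; rewrite nth_iota // add0n /a => hh; rewrite /a hh in am.
have f1 := fl _ vin; have f2 := fl _ vn.
rewrite /dist -/a ifT; last by lia.
by exists (find a (iota 0 #|V|)).
Qed.
End Nbhd.
Section Nbhd2.
Variables (V : finType) (f : rel V).

Lemma nbhd_cat m n a b c : b \in nbhd f m a -> c \in nbhd f n b -> c \in nbhd f (m + n) a.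
Proof.
move=> /path_of_nbhd [p [pp lp sp]] /path_of_nbhd [q [pq lq sq]].
have := @nbhd_of_path _ f (m + n) a (p ++ q).
rewrite last_cat lp lq; apply; first by rewrite cat_path pp lp.
by rewrite size_cat; lia.
Qed.

Lemma nbhd_mono m n a b : m <= n -> b \in nbhd f m a -> b \in nbhd f n a.
Proof.
move=> mn /path_of_nbhd [p [pp <- sp]]; apply: nbhd_of_path => //; lia.
Qed.

Lemma nbhd_edge a b : f a b -> b \in nbhd f 1 a.
Proof. by move=> fab; have := @nbhd_of_path _ f 1 a [:: b]; apply => //=; rewrite fab. Qed.

Lemma path_rev (fs : symmetric f) p a :
  path f a p -> exists q, [/\ path f (last a p) q, last (last a p) q = a & size q = size p].
Proof.
elim: p a => [|z p IH] a /=; first by exists [::].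
move=> /andP [faz pz]; have [q [pq lq sq]] := IH z pz.
exists (rcons q a); split.
- by rewrite rcons_path pq lq fs faz.
- by rewrite last_rcons.
- by rewrite size_rcons sq.
Qed.

Lemma nbhd_sym (fs : symmetric f) n a b : b \in nbhd f n a -> a \in nbhd f n b.
Proof.
move=> /path_of_nbhd [p [pp lp sp]]; have [q [pq lq sq]] := path_rev fs pp.
rewrite lp in pq lq; rewrite -lq; apply: nbhd_of_path => //; lia.
Qed.

Lemma dist_self u : dist f u u = Some 0.
Proof. by have [d -> ] := dist_of_nbhd (nbhd_self f 0 u); case: d. Qed.

Lemma dist_zero u x : dist f u x = Some 0 -> x = u.
Proof. by move=> /dist_some [/= h _]; move: h; rewrite in_set1 => /eqP. Qed.

Lemma dist_edge u x y d : dist f u x = Some d -> f x y ->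
  exists2 d', dist f u y = Some d' & d' <= d.+1.
Proof.
move=> /dist_some [hx _] fxy.
have := nbhd_cat hx (nbhd_edge fxy); rewrite addn1; exact: dist_of_nbhd.
Qed.
End Nbhd2.

Lemma bigmin_seq (T : eqType) (s : seq T) (c : nat) (G : T -> nat) :
  [/\ \big[minn/c]_(i <- s) G i <= c,
      forall i, i \in s -> \big[minn/c]_(i <- s) G i <= G i &
      (\big[minn/c]_(i <- s) G i = c \/ exists2 i, i \in s & \big[minn/c]_(i <- s) G i = G i)].
Proof.
elim: s => [|x s [IH1 IH2 IH3]]; first by rewrite big_nil; split=> //; left.
rewrite big_cons; split.
- lia.
- move=> i; rewrite in_cons => /orP [/eqP -> | /IH2]; lia.
- case: (leqP (G x) (\big[minn/c]_(j <- s) G j)) => h.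
    by right; exists x; [rewrite mem_head | lia].
  case: IH3 => [e3|[i hi e3]]; first by left; lia.
  by right; exists i; [rewrite in_cons hi orbT | lia].
Qed.
Section Main.
Variables (V : finType) (e : rel V) (e_sym : symmetric e) (ID : V -> nat)
  (ID_inj : injective ID) (r : nat) (delta : V -> nat) (pr : V -> V -> V)
  (hpr : is_pred_fun e pr).

Local Notation du := (du e r delta).
Local Notation lvl := (lvl e r delta).
Local Notation is_center := (is_center e ID r delta).
Local Notation H := (spannerH e ID r delta pr).

Lemma du_some u x m : du u x = Some m -> exists2 d, dist e u x = Some d & m = r - delta u + d.
Proof. rewrite /Defs.du; case: (dist e u x) => // d [<-]; by exists d. Qed.

Lemma du_of_dist u x d : dist e u x = Some d -> du u x = Some (r - delta u + d).
Proof. by rewrite /Defs.du => ->. Qed.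

Lemma lvl_le u x m : du u x = Some m -> lvl x <= m.
Proof.
move=> h; rewrite /Defs.lvl.
have [_ H2 _] := bigmin_seq (index_enum V) (r - delta x)
   (fun u => match du u x with Some d => d | None => r - delta x end).
by have := H2 u (mem_index_enum u); rewrite h.
Qed.

Lemma lvl_le_self x : lvl x <= r - delta x.
Proof.
rewrite /Defs.lvl.
by have [H1 _ _] := bigmin_seq (index_enum V) (r - delta x)
   (fun u => match du u x with Some d => d | None => r - delta x end).
Qed.

Lemma lvl_attained x : exists u, du u x = Some (lvl x).
Proof.
have hx : du x x = Some (r - delta x) by rewrite (du_of_dist (dist_self e x)) addn0.
have [_ _ H3] := bigmin_seq (index_enum V) (r - delta x)
   (fun u => match du u x with Some d => d | None => r - delta x end).
rewrite /Defs.lvl; case: H3 => [-> | [i _ ->]]; first by exists x.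
case h: (du i x) => [d|]; first by exists i.
by exists x.
Qed.

Lemma center_ex x : exists c, is_center x c.
Proof.
have [u hu] := lvl_attained x.
have hP : (fun c => du c x == Some (lvl x)) u by rewrite /= hu.
case: (@arg_minnP V u (fun c => du c x == Some (lvl x)) ID hP) => c hc hmin.
exists c; rewrite /Defs.is_center hc /=; apply/forallP => v; apply/implyP => hv.
exact: hmin.
Qed.

Lemma lvl_edge x y : e x y -> lvl y <= (lvl x).+1.
Proof.
move=> exy; have [u hu] := lvl_attained x.
have [d hd hl] := du_some hu.
have [d' hd' le] := dist_edge hd exy.
have := lvl_le (du_of_dist hd'); lia.
Qed.

Definition P x u := (du u x == Some (lvl x)) ||
      ((du u x == Some (lvl x).+1) && [exists c, is_center x c && (ID u < ID c)]).

Lemma key d : forall x u, dist e u x = Some d -> P x u -> u \in nbhd H d x.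
Proof.
elim: d => [|d IH] x u hd hP.
  by rewrite (dist_zero hd); exact: nbhd_self.
have neq : u != x.
  by apply/eqP => ux; rewrite ux dist_self in hd.
have [epx hdp] := hpr neq hd; rewrite /= in hdp.
set p := pr u x in epx hdp.
have Hxp : H x p.
  rewrite /spannerH /inTF; apply/orP; left; apply/orP; right.
  apply/existsP; exists u; rewrite neq eqxx /=; exact: hP.
rewrite -add1n; apply: (nbhd_cat (nbhd_edge Hxp)); apply: IH => //.
have hl1 := lvl_edge epx.
have hl2 := lvl_le (du_of_dist hdp).
rewrite /P (du_of_dist hdp).
move: hP; rewrite /P (du_of_dist hd) => /orP [/eqP [h1] |
   /andP [/eqP [h1] /existsP [c /andP [hc hlt]]]].
  by apply/orP; left; apply/eqP; congr Some; lia.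
case: (ltnP (lvl p) (r - delta u + d)) => hlp; last first.
  by apply/orP; left; apply/eqP; congr Some; lia.
apply/orP; right; apply/andP; split; first by apply/eqP; congr Some; lia.
have [cp hcp] := center_ex p.
apply/existsP; exists cp; rewrite hcp /=.
move: hcp => /andP [/eqP hcpd _].
have [dc hdc edc] := du_some hcpd.
have [dc' hdc' le'] := dist_edge hdc epx.
have hx := du_of_dist hdc'.
have := lvl_le hx => hlx.
move: hc => /andP [_ /forallP /(_ cp) /implyP hci].
have : ID c <= ID cp by apply: hci; rewrite hx; apply/eqP; congr Some; lia.
lia.
Qed.

Lemma H_sym : symmetric H.
Proof. by move=> a b; rewrite /spannerH orbC. Qed.

Lemma lvl_le_r x : lvl x <= r.
Proof. have := lvl_le_self x; lia. Qed.

Lemma edge_aux x y cx cy : e x y -> is_center x cx -> is_center y cy ->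
  ID cx <= ID cy -> y \in nbhd H (2 * r + 1) x.
Proof.
move=> exy /andP [/eqP hcx _] hcy0; have /andP [/eqP hcy _] := hcy0 => hID.
have lx := lvl_le_r x; have ly := lvl_le_r y.
case: (leqP (lvl x) (lvl y)) => hl.
- have [dx hdx ex] := du_some hcx.
  have k1 := key hdx (introT orP (or_introl (introT eqP hcx))).
  have [d' hd' le'] := dist_edge hdx exy.
  have hm := du_of_dist hd'; have := lvl_le hm => hlm.
  have hPy : P y cx.
    rewrite /P hm; case: (eqVneq (r - delta cx + d') (lvl y)) => [-> | hne].
      by rewrite eqxx.
    apply/orP; right; apply/andP; split; first by apply/eqP; congr Some; lia.
    apply/existsP; exists cy; rewrite hcy0 /= ltn_neqAle hID andbT.
    by apply/eqP => /ID_inj hc; move: hm hne; rewrite hc hcy => -[<-]; rewrite eqxx.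
  have k2 := nbhd_sym H_sym (key hd' hPy).
  have := nbhd_cat k1 k2; apply: nbhd_mono; lia.
- have hl2 := lvl_edge exy.
  have [dy hdy ey] := du_some hcy.
  have k1 := key hdy (introT orP (or_introl (introT eqP hcy))).
  have eyx : e y x by rewrite e_sym.
  have [d' hd' le'] := dist_edge hdy eyx.
  have hm := du_of_dist hd'; have := lvl_le hm => hlm.
  have hPx : P x cy by rewrite /P hm; apply/orP; left; apply/eqP; congr Some; lia.
  have k2 := key hd' hPx.
  have := nbhd_cat k2 (nbhd_sym H_sym k1); apply: nbhd_mono; lia.
Qed.

Lemma edge_H x y : e x y -> y \in nbhd H (2 * r + 1) x.
Proof.
move=> exy; have [cx hx] := center_ex x; have [cy hy] := center_ex y.
case: (leqP (ID cx) (ID cy)) => h; first exact: edge_aux hx hy h.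
apply: (nbhd_sym H_sym); apply: edge_aux hy hx _; [by rewrite e_sym | lia].
Qed.

Lemma main_r u v : oleq_mul (dist H u v) (2 * r + 1) (dist e u v).
Proof.
rewrite /oleq_mul; case hd: (dist e u v) => [d|] //.
have [hv _] := dist_some hd.
have [p [pp lp sp]] := path_of_nbhd hv.
have hp : forall a, path e a p -> last a p \in nbhd H ((2 * r + 1) * size p) a.
  elim: p {pp lp sp} => [|z p IHp] a /=; first by rewrite muln0 nbhd_self.
  move=> /andP [eaz pz]; rewrite mulnS; exact: nbhd_cat (edge_H eaz) (IHp z pz).
have := hp u pp; rewrite lp => h.
have [d' -> le] := dist_of_nbhd (nbhd_mono (leq_mul (leqnn (2 * r + 1)) sp) h).
by exists d'.
Qed.
End Main.

Theorem lemma10 (V : finType) (e : rel V)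
  (e_sym : symmetric e) (e_irr : irreflexive e)
  (ID : V -> nat) (ID_inj : injective ID)
  (k : nat) (hk : 2 <= k)
  (delta : V -> nat) (hdelta : forall v, delta v <= k.-1)
  (pr : V -> V -> V) (hpr : is_pred_fun e pr) :
  forall u v : V,
    oleq_mul (dist (spannerH e ID k.-1 delta pr) u v) (2 * k - 1) (dist e u v).
Proof.
move=> u v.
have -> : 2 * k - 1 = 2 * k.-1 + 1 by lia.
exact: main_r.
Qed.
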